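(* Let $\mathcal X\subset\mathbb R^p$ be a finite set (with Euclidean distance $d$) having a convex-nice clustering $\mathcal C=\{C_1,\ldots,C_k\}$, and let $\beta=\min_i|C_i|/|\mathcal X|$. Let $\ell$ be an integer with $k\le\ell\le|\mathcal X|$. If the points of $\mathcal X$ are presented in a uniformly random order, then with probability at least $1-ke^{-\beta\ell}$, the final centers of sequential $\ell$-means induce a clustering of $\mathcal X$ that is a refinement of $\mathcal C$.
   Context: A clustering of $\mathcal X$ is a set of nonempty, pairwise disjoint subsets whose union is $\mathcal X$. A clustering $\mathcal C=\{C_1,\ldots,C_k\}$ is convex-nice if for any $i\ne j$, any points $x,y$ in the convex hull of $C_i$ and any point $z$ in the convex hull of $C_j$, $d(y,x)<d(z,x)$. A list $T=(t_1,\ldots,t_m)$ induces the clustering of $\mathcal X$ assigning each $x$ to the index $i$ minimizing $\|x-t_i\|$ (ties broken by smallest $i$), empty clusters discarded. $\mathcal C$ is a refinement of $\mathcal C'$ if $x\sim_{\mathcal C}y$ implies $x\sim_{\mathcal C'}y$, where $x\sim_{\mathcal C}y$ means $x,y$ lie in the same cluster of $\mathcal C$. Sequential $\ell$-means on input sequence $x_1,\ldots,x_N$: set $t_i=x_i$ and $n_i=1$ for $i=1,\ldots,\ell$; then for each subsequent point $x$: let $i$ be the index of the closest center to $x$ (ties by smallest index), increment $n_i$, and replace $t_i$ by $t_i+(1/n_i)(x-t_i)$. Output the final $(t_1,\ldots,t_\ell)$. *)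

(* Defs.v *)
From mathcomp Require Import all_boot all_fingroup.
From Stdlib Require Import Reals.
Set Implicit Arguments. Unset Strict Implicit. Unset Printing Implicit Defensive.

Local Open Scope R_scope.

Definition pt (p : nat) := 'I_p -> R.

Definition dist (p : nat) (x y : pt p) : R :=
  sqrt (\big[Rplus/0%R]_(i < p) ((x i - y i) * (x i - y i))).

(* Index of the closest center to x in the list ts (ties: smallest index). *)
Fixpoint nearest_aux (p : nat) (x : pt p) (ts : seq (pt p)) (j bi : nat) (bd : R)
  : nat :=
  match ts with
  | [::] => bi
  | t :: ts' =>
      if Rlt_dec (dist x t) bd then nearest_aux x ts' j.+1 j (dist x t)
      else nearest_aux x ts' j.+1 bi bd
  end.

Definition nearest (p : nat) (ts : seq (pt p)) (x : pt p) : nat :=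
  match ts with
  | [::] => 0%nat
  | t :: ts' => nearest_aux x ts' 1 0 (dist x t)
  end.

(* One step of sequential l-means: state = (centers, counts). *)
Definition smeans_step (p : nat) (st : seq (pt p) * seq nat) (x : pt p)
  : seq (pt p) * seq nat :=
  let: (ts, ns) := st in
  let i := nearest ts x in
  let n' := (nth 0%nat ns i).+1 in
  let ti := nth (fun _ => 0%R) ts i in
  (set_nth (fun _ => 0%R) ts i (fun a => ti a + (/ INR n') * (x a - ti a)),
   set_nth 0%nat ns i n').

Definition seq_means (p l : nat) (pts : seq (pt p)) : seq (pt p) :=
  (foldl (@smeans_step p) (take l pts, nseq l 1%nat) (drop l pts)).1.

(* Convex hull of the cluster with label i, for points x : 'I_N -> pt p and
   labelling c : 'I_N -> 'I_k. *)
Definition in_hull (p N k : nat) (x : 'I_N -> pt p) (c : 'I_N -> 'I_k)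
  (i : 'I_k) (y : pt p) : Prop :=
  exists w : 'I_N -> R,
    (forall j, 0 <= w j) /\ (forall j, c j != i -> w j = 0) /\
    \big[Rplus/0%R]_(j < N) w j = 1 /\
    forall a, y a = \big[Rplus/0%R]_(j < N) (w j * x j a).

Definition convex_nice (p N k : nat) (x : 'I_N -> pt p) (c : 'I_N -> 'I_k) : Prop :=
  forall i j : 'I_k, i <> j ->
  forall a b z : pt p, in_hull x c i a -> in_hull x c i b -> in_hull x c j z ->
    dist b a < dist z a.

Definition cluster_size (N k : nat) (c : 'I_N -> 'I_k) (i : 'I_k) : nat :=
  #|[set j | c j == i]|.

Definition ordered_input (p N : nat) (x : 'I_N -> pt p) (s : {perm 'I_N})
  : seq (pt p) := [seq x (s j) | j <- enum 'I_N].

Definition induced_refines (p N k : nat) (x : 'I_N -> pt p) (c : 'I_N -> 'I_k)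
  (T : seq (pt p)) : bool :=
  [forall a, forall b, (nearest T (x a) == nearest T (x b)) ==> (c a == c b)].

Definition good_order (p N k l : nat) (x : 'I_N -> pt p) (c : 'I_N -> 'I_k)
  (s : {perm 'I_N}) : bool :=
  induced_refines x c (seq_means l (ordered_input x s)).

(* Main.v *)
From HB Require Import structures.
Require Import Defs.
From mathcomp Require Import all_boot all_fingroup.
From Stdlib Require Import Reals.
From Stdlib Require Import Lra Lia.
From mathcomp Require zify.

Lemma RplusA : associative Rplus. Proof. by move=> a b d; rewrite Rplus_assoc. Qed.
HB.instance Definition _ := Monoid.isComLaw.Build R 0%R Rplus RplusA Rplus_comm Rplus_0_l.

Section Geo.
Local Open Scope R_scope.
Variables (p N k : nat) (x : 'I_N -> pt p) (c : 'I_N -> 'I_k).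
Hypothesis Hnice : convex_nice x c.

Lemma sumR_scale (a : R) (f : 'I_N -> R) :
  \big[Rplus/0]_(j < N) (a * f j) = a * \big[Rplus/0]_(j < N) f j.
Proof.
apply: (big_rec2 (fun s t => s = a * t)); first lra.
by move=> j s t _ ->; lra.
Qed.

Lemma sumR_ind (q : 'I_N) (v : R) :
  \big[Rplus/0]_(j < N) (if j == q then v else 0) = v.
Proof.
rewrite (bigD1 q) //= eqxx big1; first lra.
by move=> j /negbTE ->.
Qed.

Lemma dist_sym (a b : pt p) : Defs.dist a b = Defs.dist b a.
Proof.
rewrite /Defs.dist; congr sqrt; apply: eq_bigr => i _; ring.
Qed.

Lemma hull_pt q : in_hull x c (c q) (x q).
Proof.
exists (fun j => if j == q then 1 else 0); split; [|split; [|split]].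
- by move=> j; case: (j == q); lra.
- move=> j; case: (eqVneq j q) => [->|//]; by rewrite eqxx.
- exact: sumR_ind.
- move=> a; rewrite -(sumR_ind q (x q a)); apply: eq_bigr => j _.
  by case: eqP => [->|_]; lra.
Qed.

Lemma hull_conv i (t y : pt p) (lam : R) :
  in_hull x c i t -> in_hull x c i y -> 0 <= lam <= 1 ->
  in_hull x c i (fun a => t a + lam * (y a - t a)).
Proof.
move=> [w1 [H1 [H2 [H3 H4]]]] [w2 [G1 [G2 [G3 G4]]]] Hl.
exists (fun j => (1 - lam) * w1 j + lam * w2 j); split; [|split; [|split]].
- move=> j; have := H1 j; have := G1 j; nra.
- by move=> j hj; rewrite (H2 j hj) (G2 j hj); lra.
- rewrite big_split /= !sumR_scale H3 G3; lra.
- move=> a; rewrite H4 G4.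
  have -> : \big[Rplus/0]_(j < N) (((1 - lam) * w1 j + lam * w2 j) * x j a) =
     \big[Rplus/0]_(j < N) ((1-lam)*(w1 j * x j a) + lam*(w2 j * x j a)).
    by apply: eq_bigr => j _; ring.
  rewrite big_split /= !sumR_scale.
  move: (\big[Rplus/0]_(j < N) (w1 j * x j a)) (\big[Rplus/0]_(j < N) (w2 j * x j a)) => A B; ring.
Qed.

Lemma hull_disj i j y : in_hull x c i y -> in_hull x c j y -> i = j.
Proof.
move=> Hi Hj; case: (eqVneq i j) => // /eqP Hne.
have := Hnice i j Hne y y y Hi Hi Hj; lra.
Qed.

Let d : pt p := fun _ => 0.

Lemma aux_spec (y : pt p) (full : seq (pt p)) : forall n j bi,
  (size full - j)%nat = n -> (j <= size full)%nat -> (bi < j)%nat ->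
  (forall m, (m < j)%nat -> Defs.dist y (nth d full bi) <= Defs.dist y (nth d full m)) ->
  let r := nearest_aux y (drop j full) j bi (Defs.dist y (nth d full bi)) in
  (r < size full)%nat /\
  forall m, (m < size full)%nat -> Defs.dist y (nth d full r) <= Defs.dist y (nth d full m).
Proof.
elim=> [|n IH] j bi Hn Hj Hbi Hm /=.
- have Ej : j = size full by lia.
  rewrite Ej drop_size /=; split; first by lia.
  by move=> m Hm'; apply: Hm; lia.
- have Hjs : (j < size full)%nat by lia.
  rewrite (drop_nth d Hjs) /=.
  case: Rlt_dec => Hlt.
  + apply: IH; [lia|lia|lia|].
    move=> m Hm'; case: (ltngtP m j) => Hmj.
    * have := Hm m Hmj; lra.
    * lia.
    * rewrite Hmj; lra.
  + apply: IH; [lia|lia|lia|].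
    move=> m Hm'; case: (ltngtP m j) => Hmj.
    * exact: Hm.
    * lia.
    * rewrite Hmj; lra.
Qed.

Lemma nearest_spec (y : pt p) (ts : seq (pt p)) : (0 < size ts)%nat ->
  (nearest ts y < size ts)%nat /\
  forall m, (m < size ts)%nat -> Defs.dist y (nth d ts (nearest ts y)) <= Defs.dist y (nth d ts m).
Proof.
case: ts => [//|t ts] _.
have := @aux_spec y (t :: ts) (size (t :: ts) - 1)%nat 1 0 erefl ltac:(simpl; lia) ltac:(lia).
rewrite /= drop0; apply=> m Hm.
have -> : m = 0%nat by lia.
simpl; lra.
Qed.

Definition Inv (ts : seq (pt p)) : Prop :=
  (forall n, (n < size ts)%nat -> exists i, in_hull x c i (nth d ts n)) /\
  (forall i, exists n, (n < size ts)%nat /\ in_hull x c i (nth d ts n)).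

Lemma nearest_hull ts q : Inv ts ->
  (nearest ts (x q) < size ts)%nat /\ in_hull x c (c q) (nth d ts (nearest ts (x q))).
Proof.
move=> [I1 I2]; have [n [Hn Hhn]] := I2 (c q).
have Hpos : (0 < size ts)%nat by lia.
have [Hs Hmin] := nearest_spec (x q) ts Hpos.
split=> //.
have [i0 Hi0] := I1 _ Hs.
case: (eqVneq i0 (c q)) => [<-//|/eqP Hne].
have Hne' : c q <> i0 by move=> E; apply: Hne; rewrite E.
have := Hnice (c q) i0 Hne' (x q) (nth d ts n) (nth d ts (nearest ts (x q))) (hull_pt q) Hhn Hi0.
have := Hmin n Hn; rewrite !(dist_sym (x q)); lra.
Qed.

Lemma inv_set ts idx v q : Inv ts -> (idx < size ts)%nat ->
  in_hull x c (c q) (nth d ts idx) -> in_hull x c (c q) v -> Inv (set_nth d ts idx v).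
Proof.
move=> [I1 I2] Hs Ho Hv.
have Es : size (set_nth d ts idx v) = size ts by rewrite size_set_nth; lia.
split.
- move=> n; rewrite Es => Hn; rewrite nth_set_nth /=.
  case: eqP => _; [by exists (c q) | exact: I1].
- move=> i; have [n [Hn Hhn]] := I2 i; exists n; rewrite Es nth_set_nth /=.
  split=> //; case: eqP => [Ee|_ //]; subst n.
  by rewrite (hull_disj _ _ _ Hhn Ho).
Qed.

Lemma step_inv st q : Inv st.1 -> Inv (smeans_step st (x q)).1.
Proof.
case: st => ts ns HI.
have [Hs Hh] := nearest_hull ts q HI.
apply: (inv_set _ _ _ q HI Hs Hh).
apply: hull_conv => //; first exact: hull_pt.
have Hp := pos_INR (nth 0%nat ns (nearest ts (x q))).
rewrite S_INR; split.
- apply: Rlt_le; apply: Rinv_0_lt_compat; lra.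
- rewrite -Rinv_1; apply: Rinv_le_contravar; lra.
Qed.

Lemma fold_inv qs : forall st, Inv st.1 -> Inv (foldl (@smeans_step p) st (map x qs)).1.
Proof.
elim: qs => //= q qs IH st H; apply: IH; exact: step_inv.
Qed.

Lemma inv_refines T : Inv T -> induced_refines x c T.
Proof.
move=> H; apply/forallP => a; apply/forallP => b; apply/implyP => /eqP E.
have [_ Ha] := nearest_hull T a H; have [_ Hb] := nearest_hull T b H.
rewrite E in Ha; by rewrite (hull_disj _ _ _ Ha Hb).
Qed.

Lemma good_of_cover l (s : {perm 'I_N}) : (l <= N)%nat ->
  (forall i, exists j : 'I_N, (j < l)%nat /\ c (s j) = i) -> good_order l x c s.
Proof.
move=> HlN Hcov; apply: inv_refines.
have E : ordered_input x s = map x (map s (enum 'I_N)) by rewrite /ordered_input; elim: (enum 'I_N) => //= a r ->.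
rewrite /seq_means E -map_drop; apply: fold_inv => /=.
rewrite -map_take.
have Hsz : size (take l (map s (enum 'I_N))) = l by rewrite size_takel // size_map size_enum_ord.
split; rewrite size_map Hsz.
- move=> n Hn; have HnN : (n < N)%nat by lia.
  rewrite (nth_map (Ordinal HnN)); last by rewrite Hsz.
  by eexists; apply: hull_pt.
- move=> i; have [j [Hj Hc]] := Hcov i; exists (nat_of_ord j); split=> //.
  rewrite (nth_map j); last by rewrite Hsz.
  rewrite nth_take // (nth_map j); last by rewrite size_enum_ord.
  by rewrite nth_ord_enum -Hc; apply: hull_pt.
Qed.

End Geo.
Lemma card_cond (T : finType) (P : pred T) : #|[set u | P u]| = \sum_(u : T) P u.
Proof.
rewrite -sum1_card big_mkcond /=; apply: eq_bigr => u _; by rewrite inE; case: (P u).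
Qed.

Lemma sum_andb (T : finType) (P Q : pred T) :
  \sum_(u : T) ((P u && Q u) : nat) = \sum_(u | P u) (Q u : nat).
Proof. by rewrite [RHS]big_mkcond /=; apply: eq_bigr => u _; case: (P u). Qed.

Lemma card_ge (N t : nat) : t <= N -> #|[set u : 'I_N | t <= u]| = N - t.
Proof.
move=> HtN; rewrite card_cond.
rewrite -(big_mkord xpredT (fun u => nat_of_bool (t <= u))).
rewrite (@big_cat_nat _ _ _ t 0 N _ _ (leq0n t) HtN) /=.
rewrite big_nat_cond big1 ?add0n; last first.
  by move=> u /andP [/andP [_ Hu] _]; rewrite leqNgt Hu.
rewrite (eq_big_nat _ _ (F2 := fun _ => 1)); first by rewrite sum_nat_const_nat muln1.
by move=> u /andP [Hu _]; rewrite Hu.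
Qed.

Section Count.
Variables (N k : nat) (c : 'I_N -> 'I_k) (i : 'I_k).

Definition Aset (t : nat) : {set {perm 'I_N}} :=
  [set s : {perm 'I_N} | [forall j : 'I_N, (j < t) ==> (c (s j) != i)]].

Lemma A_step t (Ht : t < N) :
  (N - t) * #|Aset t.+1| = (N - t - #|[set j | c j == i]|) * #|Aset t|.
Proof.
set S := [set j | c j == i].
set T := Ordinal Ht.
have Ha : \sum_(s in Aset t) #|[set u : 'I_N | (t <= u) && (s u \notin S)]|
        = #|Aset t| * (N - t - #|S|).
  rewrite -sum_nat_const; apply: eq_bigr => s Hs.
  have -> : [set u : 'I_N | (t <= u) && (s u \notin S)] = [set u : 'I_N | t <= u] :\: (s @^-1: S).
    by apply/setP => u; rewrite !inE andbC.
  have Hsub : s @^-1: S \subset [set u : 'I_N | t <= u].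
    apply/subsetP => u; rewrite !inE => Hu; rewrite leqNgt; apply/negP => Hut.
    move: Hs; rewrite inE => /forallP /(_ u); by rewrite Hut Hu.
  by rewrite cardsD (setIidPr Hsub) (card_preimset _ (@perm_inj _ s)) card_ge ?(ltnW Ht).
have Hb : \sum_(s in Aset t) #|[set u : 'I_N | (t <= u) && (s u \notin S)]|
        = (N - t) * #|Aset t.+1|.
  under eq_bigr => s _ do rewrite card_cond sum_andb.
  rewrite exchange_big /=.
  rewrite (eq_bigr (fun _ => #|Aset t.+1|)).
    rewrite sum_nat_const; congr (_ * _).
    rewrite -(@card_ge N t (ltnW Ht)) card_cond -sum1_card big_mkcond /=.
    apply: eq_bigr => u _; have -> : (u \in (fun i : 'I_N => eqn (t - i) 0)) = (t <= u) by [].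
    by case: (t <= u).

  move=> u Htu.
  rewrite -(@sum_andb _ (fun s => s \in Aset t) (fun s : {perm 'I_N} => s u \notin S)) -card_cond.
  have -> : [set s : {perm 'I_N} | (s \in Aset t) && (s u \notin S)] =
            (mulg (tperm T u)) @^-1: Aset t.+1.
    apply/setP => s; rewrite !inE; apply/andP/forallP.
    - move=> [/forallP H1 H2] j; apply/implyP => Hj; rewrite permM.
      case: (ltngtP j t) => Hjt.
      + rewrite tpermD; first by move: (H1 j); rewrite Hjt.
        * by apply/eqP => E; move: Hjt; rewrite -E /= ltnn.
        * by apply/eqP => E; move: Hjt; rewrite -E ltnNge Htu.
      + by move: Hj; rewrite ltnS leqNgt Hjt.
      + have -> : j = T by apply: val_inj.
        by rewrite tpermL.
    - move=> H; split.
      + apply/forallP => j; apply/implyP => Hjt.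
        move: (H j); rewrite ltnS (ltnW Hjt) /= permM tpermD //.
        * by apply/eqP => E; move: Hjt; rewrite -E /= ltnn.
        * by apply/eqP => E; move: Hjt; rewrite -E ltnNge Htu.
      + by move: (H T); rewrite /= ltnSn /= permM tpermL.
  by rewrite card_preimset //; apply: mulgI.
have := Ha; rewrite Hb => ->; by rewrite mulnC.
Qed.
End Count.
Arguments Aset {N k} c i t.
Arguments A_step {N k} c i t Ht.
Section RealStuff.
Local Open Scope R_scope.
Lemma sum1k k : (\sum_(i < k) 1)%nat = k.
Proof. by rewrite sum1_card card_ord. Qed.
Lemma sum_INR_le k (a : 'I_k -> nat) b : (forall i, INR (a i) <= b) ->
  INR (\sum_(i < k) a i)%nat <= INR k * b.
Proof.
move=> H; have -> : INR k = INR (\sum_(i < k) 1)%nat by rewrite sum1k.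
apply: (big_rec2 (fun s t => INR s <= INR t * b)); first by simpl; lra.
move=> i s t _ Hst; rewrite !plus_INR /=; have := H i; lra.
Qed.
Lemma INR_subn a b : (b <= a)%nat -> INR (a - b) = INR a - INR b.
Proof. move=> H; have E := subnK H; rewrite -[in RHS]E plus_INR; ring. Qed.
Lemma exp_le x y : x <= y -> exp x <= exp y.
Proof. move=> H; case: (Rle_lt_or_eq_dec _ _ H) => [/exp_increasing|->]; lra. Qed.
Lemma exp_pow_l a n : exp a ^ n = exp (a * INR n).
Proof.
elim: n => [|n IH]; first by rewrite /= Rmult_0_r exp_0.
by rewrite S_INR /= IH -exp_plus; congr exp; ring.
Qed.

Lemma A_bound N k (c : 'I_N -> 'I_k) i t : (0 < N)%nat -> (t <= N)%nat ->
  INR #|Aset c i t| <= INR #|[set: {perm 'I_N}]| *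
     (1 - INR #|[set j | c j == i]| / INR N) ^ t.
Proof.
move=> HN; elim: t => [_|t IH Ht].
- have -> : Aset c i 0 = setT by apply/setP => s; rewrite !inE; apply/forallP.
  simpl; lra.
- set m := #|[set j | c j == i]|.
  have HmN : (m <= N)%nat by apply: leq_trans (max_card _) _; rewrite card_ord.
  have Hstep := A_step c i t Ht.
  have HR : INR (N - t) * INR #|Aset c i t.+1| = INR (N - t - m) * INR #|Aset c i t|.
    by rewrite -!mult_INR; congr INR; exact: Hstep.
  have IH' := IH (ltnW Ht).
  move: IH' HR; set D := INR #|[set: _]|; set A0 := INR #|Aset c i t|;
    set A1 := INR #|Aset c i t.+1| => IH' HR.
  have HNpos : 0 < INR N by apply: lt_0_INR; apply/ltP.
  set q := INR m / INR N.
  have Hq : q * INR N = INR m by rewrite /q; field; lra.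
  have HmR : INR m <= INR N by apply: le_INR; apply/leP.
  have Hm0 := pos_INR m.
  have Hq0 : 0 <= q by rewrite /q; apply: Rmult_le_pos => //; apply/Rlt_le/Rinv_0_lt_compat.
  have Hq1 : q <= 1 by nra.
  have HA0 := pos_INR #|Aset c i t|.
  have HD := pos_INR #|[set: {perm 'I_N}]|.
  have Hkey : INR (N - t - m) <= INR (N - t) * (1 - q).
    have Ht0 := pos_INR t.
    case: (leqP m (N - t)) => Hm.
    + rewrite INR_subn // INR_subn ?(ltnW Ht) //.
      nra.
    + have -> : (N - t - m = 0)%nat by lia.
      have := pos_INR (N - t); simpl; nra.
  have HNt : 0 < INR (N - t) by apply: lt_0_INR; apply/ltP; lia.
  have HA1 : A1 <= (1 - q) * A0.
    apply: (Rmult_le_reg_l (INR (N - t))) => //.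
    rewrite HR; rewrite /A0; nra.
  have H2 := Rmult_le_compat_l (1 - q) _ _ ltac:(lra) IH'.
  change (INR #|[set j | c j == i]| / INR N) with q in H2.
  rewrite /=; nra.
Qed.

End RealStuff.

Theorem mainTheorem10 (p N k l : nat) (x : 'I_N -> pt p) (c : 'I_N -> 'I_k)
  (beta : R)
  (Hinj : injective x)
  (Hsurj : forall i : 'I_k, exists j, c j = i)
  (Hnice : convex_nice x c)
  (Hbeta_le : forall i : 'I_k, (beta <= INR (cluster_size c i) / INR N)%R)
  (Hbeta_eq : exists i : 'I_k, beta = (INR (cluster_size c i) / INR N)%R)
  (Hkl : (k <= l)%N) (HlN : (l <= N)%N) :
  (1 - INR k * exp (- (beta * INR l))
     <= INR #|[set s : {perm 'I_N} | good_order l x c s]|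
        / INR #|[set: {perm 'I_N}]|)%R.
Proof.
set D := #|[set: {perm 'I_N}]|.
set Bad := \bigcup_(i : 'I_k) Aset c i l.
have Hsub : ~: Bad \subset [set s : {perm 'I_N} | good_order l x c s].
  apply/subsetP => s; rewrite !inE => Hs.
  apply: (@good_of_cover _ _ _ x c Hnice l s HlN) => i.
  have : s \notin Aset c i l by apply: contra Hs => Hi; apply/bigcupP; exists i.
  rewrite inE negb_forall => /existsP [j]; rewrite negb_imply negbK => /andP [Hj /eqP Hc].
  by exists j.
have Hbig : (#|Bad| <= \sum_(i : 'I_k) #|Aset c i l|)%N.
  rewrite /Bad; elim/big_rec2: _ => [|i U n _ HU]; first by rewrite cards0. apply: leq_trans (leq_card_setU _ _) _; by rewrite leq_add2l.
have HC := cardsC Bad.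
have HG := subset_leq_card Hsub.
have HDT : D = #|{perm 'I_N}| by rewrite /D cardsT.
have Hnat : (D <= #|[set s : {perm 'I_N} | good_order l x c s]| + \sum_(i : 'I_k) #|Aset c i l|)%N.
  rewrite HDT -HC addnC; exact: leq_add.
have HD : (0 < INR D)%R.
  apply: lt_0_INR; apply/ltP; apply/card_gt0P; exists 1%g; by rewrite inE.
have Hper : forall i : 'I_k, (INR #|Aset c i l| <= INR D * exp (- (beta * INR l)))%R.
  move=> i; have [j _] := Hsurj i.
  have HN : (0 < N)%N by case: j => j' /= Hj'; lia.
  have HA := @A_bound N k c i l HN HlN.
  set q := (INR #|[set j | c j == i]| / INR N)%R in HA.
  have Hbq : (beta <= q)%R by exact: Hbeta_le.
  have HNpos : (0 < INR N)%R by apply: lt_0_INR; apply/ltP.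
  have HmN : (#|[set j | c j == i]| <= N)%N by apply: leq_trans (max_card _) _; rewrite card_ord.
  have HmR : (INR #|[set j | c j == i]| <= INR N)%R by apply: le_INR; apply/leP.
  have Hq : (q * INR N = INR #|[set j | c j == i]|)%R by rewrite /q; field; lra.
  have Hq1 : (q <= 1)%R by nra.
  have Hr : ((1 - q) ^ l <= exp (- (beta * INR l)))%R.
    apply: Rle_trans (_ : exp (- q) ^ l <= _)%R.
      apply: pow_incr; have := exp_ineq1_le (- q); lra.
    rewrite exp_pow_l; apply: exp_le.
    have := pos_INR l; nra.
  have HD0 := pos_INR D.
  apply: Rle_trans HA _; apply: Rmult_le_compat_l; [exact: pos_INR | exact: Hr].
have Hsum := @sum_INR_le k (fun i => #|Aset c i l|) _ Hper.
have HnatR := le_INR _ _ (elimT leP Hnat).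
rewrite plus_INR in HnatR.
set G := INR #|[set s : {perm 'I_N} | good_order l x c s]| in HnatR *.
have -> : (1 - INR k * exp (- (beta * INR l)) =
           (INR D - INR k * (INR D * exp (- (beta * INR l)))) / INR D)%R.
  by field; lra.
apply: Rmult_le_compat_r; first by apply/Rlt_le/Rinv_0_lt_compat.
lra.
Qed.
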